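(* Let $(x_k)_{k\ge0}$ be indeterminates, define $a_n=x_n$ if $n=2^k-1$ for some integer $k\ge0$ and $a_n=0$ otherwise, and let $d(n)=\det\left(a_{i+j}\right)_{i,j=0}^{n-1}$ with $d(0)=1$. For $k\ge1$ and $n\ge0$ let $\lambda_k(n)$ denote the degree of $d(n)$ in the variable $x_{2^k-1}$. Then for every $k\ge1$: $\lambda_k(n)=0$ for $0\le n\le 2^{k-1}$; $\lambda_k(2^{k-1}+i)=2i$ for $0\le i\le 2^{k-1}$; $\lambda_k(2^k+i)=2^k-2i$ for $0\le i\le 2^{k-1}$; $\lambda_k(n)=0$ for $2^k+2^{k-1}\le n\le 2^{k+1}$; and for $n>2^{k+1}$, $\lambda_k(n)=\lambda_k(n \bmod 2^{k+1})$.
   Context: The paper writes $d(n)=(-1)^{\sum_{i\ge0}\binom{\lambda_i(n)}{2}}\prod_{i\ge0}x_{2^i-1}^{\lambda_i(n)}$, so $\lambda_i(n)$ is the exponent of $x_{2^i-1}$ in $d(n)$. *)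

(* Defs.v *)
From mathcomp Require Import all_boot all_algebra.
From mathcomp Require Import mpoly.
Set Implicit Arguments. Unset Strict Implicit. Unset Printing Implicit Defensive.
Import GRing.Theory.
Local Open Scope ring_scope.

Definition is_pow2m1 (t : nat) : bool := [exists k : 'I_t.+2, t.+1 == (2 ^ k)%N].

(* d(n) lives in Z[x_0, ..., x_{2n}]; only x_0..x_{2n-2} actually occur. *)
Definition hank_entry (n t : nat) : {mpoly int[n.*2.+1]} :=
  if is_pow2m1 t then 'X_(inord t) else 0.

Definition hankmx (n : nat) : 'M[{mpoly int[n.*2.+1]}]_n :=
  \matrix_(i < n, j < n) hank_entry n (i + j)%N.

Definition d (n : nat) : {mpoly int[n.*2.+1]} := \det (hankmx n).

(* degree of a multivariate polynomial p in the variable x_j (0 if x_j is not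
   among the variables of the ring, or p = 0) *)
Definition degvar (N : nat) (p : {mpoly int[N.+1]}) (j : nat) : nat :=
  if (j <= N)%N then \max_(m <- msupp p) m (inord j) else 0%N.

Definition lambda (k n : nat) : nat := degvar (d n) (2 ^ k).-1.

(* Main.v *)
Require Import Defs.
From mathcomp Require Import all_boot all_algebra all_fingroup.
From mathcomp Require Import mpoly.
From mathcomp Require Import zify.
Set Implicit Arguments. Unset Strict Implicit. Unset Printing Implicit Defensive.
Import GRing.Theory.
Lemma pow2m1P t : is_pow2m1 t <-> exists r, t.+1 = 2 ^ r.
Proof.
split.
  by move=> /existsP [r /eqP ->]; exists r.
move=> [r hr]; apply/existsP.
have hr' : r < t.+2.
  have := ltn_expl r (isT : 1 < 2); rewrite -hr; lia.
by exists (Ordinal hr'); rewrite /= hr.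
Qed.

Lemma pow2m1W t m : is_pow2m1 t -> 2 ^ m < 2 * t.+1 -> t.+1 < 2 * 2 ^ m -> t.+1 = 2 ^ m.
Proof.
move=> /pow2m1P [r ->]; rewrite -!expnS !ltn_exp2l // => h1 h2.
by have -> : r = m by lia.
Qed.

Definition Pw n := 2 ^ up_log 2 n.

Lemma Pw_bounds n : 0 < n -> n <= Pw n < 2 * n.
Proof.
rewrite /Pw; case: n => [//|[|n]] _; first by rewrite up_log1.
have /andP[h1 h2] := up_log_bounds (isT : 1 < 2) (isT : 1 < n.+2).
have hk : 0 < up_log 2 n.+2 by rewrite up_log_gt0.
rewrite h2 /= -(prednK hk) expnS; lia.
Qed.

Lemma Pw_even n : 1 < n -> exists P', Pw n = 2 * P'.
Proof.
move=> hn; rewrite /Pw.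
have hk : 0 < up_log 2 n by rewrite up_log_gt0 hn.
by rewrite -(prednK hk) expnS; eexists.
Qed.

Lemma Pw1 : Pw 1 = 1. Proof. by rewrite /Pw up_log1. Qed.

Fixpoint F fuel n i := match fuel with 0 => 0 | fu.+1 =>
  if n == 0 then 0 else if Pw n - n <= i then (Pw n).-1 - i else F fu (Pw n - n) i end.
Definition f n i := F n n i.

Lemma F_fuel fuel fuel' n i : n <= fuel -> n <= fuel' -> F fuel n i = F fuel' n i.
Proof.
elim: fuel fuel' n => [|fu IH] [|fu'] n h1 h2 /=; try (have -> : n = 0 by lia); rewrite ?eqxx //.
case: eqP => // /eqP hn.
case: ifP => // _; apply: IH; have := Pw_bounds (n:=n); lia.
Qed.

Lemma f_eq n i : 0 < n -> f n i = if Pw n - n <= i then (Pw n).-1 - i else f (Pw n - n) i.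
Proof.
case: n => // n _; rewrite /f /=; case: ifP => // _.
apply: F_fuel => //; have := Pw_bounds (n:=n.+1); lia.
Qed.

Lemma f_prop n i : i < n -> [/\ f n i < n, is_pow2m1 (i + f n i) & f n (f n i) = i].
Proof.
elim: n.+1 {-2}n (ltnSn n) i => // N IH {}n hnN i hi.
have hn : 0 < n by lia.
have := Pw_bounds hn; set P := Pw n => hP.
rewrite (f_eq i hn) -/P.
case: ifP => hiP.
  split; first lia.
    by apply/pow2m1P; exists (up_log 2 n); rewrite -/(Pw n) -/P; lia.
  by rewrite (f_eq _ hn) -/P ifT; lia.
have hiM : i < P - n by lia.
have [h1 h2 h3] := IH (P - n) ltac:(lia) i hiM.
split => //; first lia.
by rewrite (f_eq _ hn) -/P ifF ?h3 //; lia.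
Qed.

Lemma f_uniq n (g : nat -> nat) :
  (forall i, i < n -> g i < n) ->
  (forall i j, i < n -> j < n -> g i = g j -> i = j) ->
  (forall i, i < n -> is_pow2m1 (i + g i)) ->
  forall i, i < n -> g i = f n i.
Proof.
elim: n.+1 {-2}n (ltnSn n) g => // N IH {}n hnN g hlt hinj hpow i hi.
have hn : 0 < n by lia.
have := Pw_bounds hn; set P := Pw n => hP.
rewrite (f_eq i hn) -/P.
have hPm : P = 2 ^ up_log 2 n by [].
case: (ltnP 1 n) => hn1; last first.
  have e : n = 1 by lia.
  move: (hlt i hi) hP; rewrite /P e Pw1 subnn leq0n; lia.
have [P' eP'] := Pw_even hn1; rewrite -/P in eP'.
set M := P - n.
have U : forall j, j < n -> P <= 2 * j -> g j = P.-1 - j.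
  move=> j hj h2j; have := pow2m1W (hpow j hj) (m := up_log 2 n).
  rewrite -hPm; have := hlt j hj; lia.
have S1 : forall i, i < M -> g i < M.
  move=> i' hi'; have hi'n : i' < n by lia.
  have hg := hlt i' hi'n.
  case: (leqP M (g i')) => // hM.
  case: (leqP P (2 * g i')) => h2.
    have := pow2m1W (hpow i' hi'n) (m := up_log 2 n); rewrite -hPm; lia.
  have hj : P.-1 - g i' < n by lia.
  have := U _ hj ltac:(lia).
  have -> : P.-1 - (P.-1 - g i') = g i' by lia.
  move=> /(hinj _ _ hj hi'n); lia.
have S2 : forall i, i < M -> g i = f M i.
  apply: (IH M) => //; first lia.
  - move=> a b ha hb; apply: hinj; lia.
  - move=> a ha; apply: hpow; lia.
case: ifP => hMi; last first.
  by apply: S2; lia.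
case: (leqP P (2 * i)) => h2i; first exact: U.
case: (leqP P (2 * g i)) => h2g.
  have := pow2m1W (hpow i hi) (m := up_log 2 n); rewrite -hPm; have := hlt i hi; lia.
have hg := hlt i hi.
case: (leqP M (g i)) => hgM.
  have hj : P.-1 - g i < n by lia.
  have := U _ hj ltac:(lia).
  have -> : P.-1 - (P.-1 - g i) = g i by lia.
  move=> /(hinj _ _ hj hi); lia.
have [f1 f2 f3] := f_prop hgM.
have hh : f M (g i) < n by move: f1; rewrite /M; lia.
have := S2 _ f1; rewrite f3 => /(hinj _ _ hh hi) e; move: f1 hMi; rewrite e /M; lia.
Qed.
Definition cnt j n := \sum_(i < n) (i + f n i == j).

Lemma cnt_rec j n : 0 < n -> cnt j n = cnt j (Pw n - n) + (n - (Pw n - n)) * ((Pw n).-1 == j).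
Proof.
move=> hn; have := Pw_bounds hn; set P := Pw n => hP.
rewrite /cnt -!(big_mkord xpredT (fun i => nat_of_bool (i + f _ i == j))).
rewrite (big_cat_nat _ (n := P - n)) //=; last lia.
congr (_ + _).
  rewrite big_nat_cond [RHS]big_nat_cond; apply: eq_bigr => i /andP[/andP[_ hi] _].
  by rewrite (f_eq _ hn) -/P ifF //; lia.
rewrite -sum_nat_const_nat big_nat_cond [RHS]big_nat_cond; apply: eq_bigr => i /andP[/andP[h1 h2] _].
rewrite (f_eq _ hn) -/P ifT //; congr (nat_of_bool (_ == _)); lia.
Qed.

Definition hh Q r := let s := minn r (4 * Q - r) in if s <= Q then 0 else 2 * s - 2 * Q.
Definition G Q n := hh Q (n %% (4 * Q)).

Lemma mod_sym Q P n : 0 < Q -> n <= P -> 4 * Q %| P ->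
  G Q (P - n) = G Q n.
Proof.
move=> hQ hnP /dvdnP [c eP]; subst P.
rewrite /G.
have hd : 0 < 4 * Q by lia.
have e : n = n %/ (4 * Q) * (4 * Q) + n %% (4 * Q) by rewrite -divn_eq.
have hr : n %% (4 * Q) < 4 * Q by rewrite ltn_mod.
set r := n %% (4 * Q) in e hr *; set q := n %/ (4 * Q) in e. clearbody r q.
have hqc : q <= c.
  have : q * (4 * Q) <= c * (4 * Q) by lia.
  by rewrite leq_pmul2r.
case: (posnP r) => hr0.
  have -> : c * (4 * Q) - n = (c - q) * (4 * Q) by rewrite mulnBl; lia.
  by rewrite modnMl hr0.
have hqc' : q < c.
  have : q * (4 * Q) < c * (4 * Q) by lia.
  by rewrite ltn_pmul2r.
have -> : c * (4 * Q) - n = (c - q.+1) * (4 * Q) + (4 * Q - r).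
  rewrite mulnBl; have : q.+1 * (4 * Q) <= c * (4 * Q) by rewrite leq_pmul2r.
  rewrite mulSn; lia.
rewrite modnMDl modn_small; last lia.
rewrite /hh; congr (if _ then _ else _); lia.
Qed.

Lemma cnt_G k n : 0 < k -> cnt (2 ^ k).-1 n = G (2 ^ k.-1) n.
Proof.
move=> hk.
set Q := 2 ^ k.-1.
have hQ : 0 < Q by rewrite expn_gt0.
have e2 : 2 ^ k = 2 * Q by rewrite /Q -expnS prednK.
have e4 : 2 ^ k.+1 = 4 * Q by rewrite expnS e2; lia.
elim: n.+1 {-2}n (ltnSn n) => // N IH {}n hnN.
case: (posnP n) => hn.
  by rewrite hn /cnt big_ord0 /G mod0n /hh /= min0n leq0n.
rewrite cnt_rec //; have := Pw_bounds hn; set P := Pw n => hP.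
rewrite IH; last lia.
rewrite e2.
have [m em] : exists m, P = 2 ^ m by exists (up_log 2 n).
case: (ltngtP m k) => hmk.
- have hPQ : P <= Q by rewrite em /Q leq_exp2l //; lia.
  rewrite /G !modn_small; try lia.
  have -> : (P.-1 == (2 * Q).-1) = false by apply/negbTE/eqP; lia.
  rewrite muln0 addn0 /hh /=; clearbody P; clear -hPQ hP hQ; case: ifP; case: ifP; lia.
- case: (ltngtP m k.+1) => hmk1.
  + lia.
  + have hc : 4 * Q %| P.
      by rewrite -e4 em; apply: dvdn_exp2l; lia.
    rewrite mod_sym //; last lia.
    have : (P.-1 == (2 * Q).-1) = false.
      apply/negbTE; move: hc; rewrite em -e4; have : 2 ^ k.+1 < 2 ^ m by rewrite ltn_exp2l.
      move=> h1 h2; apply/eqP => h3; lia.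
    by move=> ->; rewrite muln0 addn0.
  + have hP4 : P = 4 * Q by rewrite em hmk1.
    case: (ltnP n P) => hnP4.
      rewrite /G !modn_small; try lia.
      rewrite /hh /= /=; have -> : (P.-1 == (2 * Q).-1) = false by apply/negbTE/eqP; lia.
      clearbody P; clear -hP4 hP hnP4 hQ; case: ifP; case: ifP; lia.
    have -> : n = P by lia.
    rewrite subnn /G hP4 modnn mod0n /hh /= min0n leq0n.
    have -> : ((4*Q).-1 == (2*Q).-1) = false by apply/negbTE/eqP; lia.
    by rewrite muln0.
- have hP2 : P = 2 * Q by rewrite em hmk.
  rewrite /G !modn_small; try lia.
  rewrite /hh /= /=; have -> : (P.-1 == (2 * Q).-1) = true by apply/eqP; lia.
  clearbody P; clear -hP2 hP hQ; case: ifP; case: ifP; lia.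
Qed.
Lemma f_lt n i : i < n -> f n i < n.
Proof. by case/f_prop. Qed.

Section Alg.
Variable n : nat.

Definition s0fun (i : 'I_n) : 'I_n := Ordinal (f_lt (ltn_ord i)).
Lemma s0_inj : injective s0fun.
Proof.
move=> i j /(congr1 val) /= e.
apply/val_inj; have [_ _ h1] := f_prop (ltn_ord i); have [_ _ h2] := f_prop (ltn_ord j).
by rewrite /= -h1 -h2 e.
Qed.
Definition s0 : 'S_n := perm s0_inj.

Lemma d_eq : d n = ((-1) ^+ s0 * 'X_[(\sum_(i < n) U_(inord (i + f n i)%N : 'I_(n.*2.+1)))%MM])%R.
Proof.
rewrite /d /determinant (bigD1 s0) //= [X in (_ + X)%R]big1 ?addr0; last first.
  move=> s hs.
  case: (boolP [forall i : 'I_n, is_pow2m1 (i + s i)]) => hall.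
    exfalso; move/eqP: hs; apply; apply/permP => i; apply/val_inj.
    rewrite permE /=.
    pose g := fun j : nat => if insub j is Some o then val (s o) else 0%N.
    have gE : forall j : 'I_n, g j = s j.
      by move=> j; rewrite /g valK.
    rewrite -gE; apply: f_uniq => // [j hj|a b ha hb|j hj].
    - by rewrite -[j]/(val (Ordinal hj)) gE.
    - rewrite -[a]/(val (Ordinal ha)) -[b]/(val (Ordinal hb)) !gE => /val_inj/perm_inj.
      by move/(congr1 val).
    - by rewrite -[j]/(val (Ordinal hj)) gE; exact: (forallP hall).
  move/forallPn: hall => [i hi].
  rewrite (bigD1 i) //= mxE /hank_entry (negbTE hi).
  by rewrite mul0r mulr0.
congr (_ * _)%R.
have hm := big_morph (fun m : 'X_{1..n.*2.+1} => ('X_[m] : {mpoly int[n.*2.+1]})) (@mpolyXD _ _) (@mpolyX0 _ _).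
simpl in hm; rewrite hm.
apply: eq_bigr => i _; rewrite mxE /hank_entry permE /=.
by have [_ -> _] := f_prop (ltn_ord i).
Qed.

End Alg.

Lemma lambda_cnt k n : lambda k n = cnt (2 ^ k).-1 n.
Proof.
rewrite /lambda /degvar d_eq.
set m := (\sum_(i < n) _)%MM.
have -> : \max_(mm <- msupp (((-1) ^+ s0 n * 'X_[m])%R : {mpoly int[n.*2.+1]})) mm (inord (2 ^ k).-1) = m (inord (2 ^ k).-1).
  case: (odd_perm (s0 n)); rewrite ?expr1 ?expr0 ?mul1r ?mulN1r.
    by rewrite (perm_big _ (msuppN _)) msuppX big_seq1.
  by rewrite msuppX big_seq1.
rewrite /m mnm_sumE /cnt.
case: ifP => hj.
  apply: eq_bigr => i _; rewrite mnm1E -val_eqE /= !inordK //.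
  have [h1 _ _] := f_prop (ltn_ord i); have := ltn_ord i; lia.
rewrite big1 // => i _; have [h1 _ _] := f_prop (ltn_ord i).
move/negbT: hj; have := ltn_ord i. lia.
Qed.

Theorem theorem4p4 (k : nat) (hk : (1 <= k)%N) :
  [/\ (forall n, (n <= 2 ^ k.-1)%N -> lambda k n = 0%N),
      (forall i, (i <= 2 ^ k.-1)%N -> lambda k (2 ^ k.-1 + i) = (2 * i)%N),
      (forall i, (i <= 2 ^ k.-1)%N -> lambda k (2 ^ k + i) = (2 ^ k - 2 * i)%N),
      (forall n, (2 ^ k + 2 ^ k.-1 <= n <= 2 ^ k.+1)%N -> lambda k n = 0%N) &
      (forall n, (2 ^ k.+1 < n)%N -> lambda k n = lambda k (n %% 2 ^ k.+1))].
Proof.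
have hQ : 0 < 2 ^ k.-1 by rewrite expn_gt0.
have e2 : 2 ^ k = 2 * 2 ^ k.-1 by rewrite -expnS prednK.
have e4 : 2 ^ k.+1 = 4 * 2 ^ k.-1 by rewrite expnS e2; lia.
have L : forall n, lambda k n = G (2 ^ k.-1) n by move=> n; rewrite lambda_cnt cnt_G.
rewrite e4 e2.
move: (2 ^ k.-1) hQ e2 e4 L => Q hQ e2 e4 L.
split.
- move=> n hn; rewrite L /G modn_small /hh /=; last lia.
  case: ifP; lia.
- move=> i hi; rewrite L /G modn_small /hh /=; last lia.
  case: ifP; lia.
- move=> i hi; rewrite L /G modn_small /hh /=; last lia.
  case: ifP; lia.
- move=> n /andP[h1 h2]; rewrite L /G.
  case: (ltnP n (4 * Q)) => h3.
    rewrite modn_small /hh /=; last lia.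
    case: ifP; lia.
  have -> : n = 4 * Q by lia.
  by rewrite modnn /hh /= min0n leq0n.
- move=> n hn; rewrite !L /G modn_mod //.
Qed.
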